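(* Fix integers $n\ge 3$, $k\ge 2$, $s>0$ and integers $d_i,g_i$ for $1\le i\le s$ with $d_i>g_i\ge 0$ for all $i$, such that $$\sum_{i=1}^{s}(kd_i+1-g_i)\le \binom{n+k}{n}.$$ Then $$\sum_{i=1}^{s}((k+1)d_i+1-g_i)<\binom{n+k+1}{n}.$$ *)

(* Defs.v *)
From mathcomp Require Import all_boot all_order all_algebra.

(* Main.v *)
Require Import Defs.
From mathcomp Require Import all_boot all_order all_algebra.
From mathcomp Require Import zify ring.
Import Order.TTheory GRing.Theory Num.Theory.
Local Open Scope ring_scope.

Theorem lemma3p11 (n k s : nat) (d g : 'I_s -> nat)
  (hn : (3 <= n)%N) (hk : (2 <= k)%N) (hs : (0 < s)%N)
  (hdg : forall i, (g i < d i)%N)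
  (hsum : \sum_(i < s) ((k * d i)%:Z + 1 - (g i)%:Z) <= ('C(n + k, n))%:Z) :
  \sum_(i < s) (((k + 1) * d i)%:Z + 1 - (g i)%:Z) < ('C(n + k + 1, n))%:Z.
Proof.
set A := \sum_(i < s) ((k * d i)%:Z + 1 - (g i)%:Z) in hsum *.
set D := (\sum_(i < s) d i)%N.
have DZ : D%:Z = \sum_(i < s) (d i)%:Z by rewrite /D (big_morph Posz PoszD (erefl 0%:Z)).
have E : \sum_(i < s) (((k + 1) * d i)%:Z + 1 - (g i)%:Z) = A + D%:Z.
  rewrite /A DZ -big_split /=; apply: eq_bigr => i _.
  rewrite mulnDl mul1n PoszD; ring.
have L : ((k - 1) * D)%:Z < A.
  have L1 : \sum_(i < s) (((k - 1) * d i)%:Z + 1) <= A.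
    apply: ler_sum => i _; have := hdg i; lia.
  rewrite big_split /= sumr_const card_ord in L1.
  have HD : (((k - 1) * D)%N = \sum_(i < s) ((k - 1) * d i))%N by rewrite big_distrr.
  rewrite natz in L1.
  have -> : ((k - 1) * D)%:Z = \sum_(i < s) ((k - 1) * d i)%:Z.
    by rewrite HD (big_morph Posz PoszD (erefl 0%:Z)).
  apply: (lt_le_trans _ L1); rewrite ltrDl; by [] || lia.
case: n hn hsum E => [|m] // hn hsum E.
have P : 'C(m.+1 + k + 1, m.+1) = ('C(m.+1 + k, m.+1) + 'C(m.+1 + k, m))%N.
  by rewrite addn1 binS.
have Q := mul_bin_left (m.+1 + k) m.
have Q' : (m.+1 + k - m = k + 1)%N by lia.
rewrite Q' in Q.
rewrite E P.
set C := 'C(m.+1 + k, m.+1) in hsum Q P *.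
set B := 'C(m.+1 + k, m) in Q P *.
have H1 : ((k-1) * D < C)%N by lia.
have H2 : ((k+1) <= m.+1 * (k-1))%N by nia.
have H3 : ((k+1) * D < (k+1) * B)%N.
  rewrite -Q; apply: (leq_ltn_trans (leq_mul H2 (leqnn D))).
  rewrite -mulnA ltn_mul2l /=; exact: H1.
have H4 : (D < B)%N by rewrite ltn_mul2l in H3; case/andP: H3.
lia.
Qed.
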